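(* Let $\mathcal M$ be the quiver whose vertices are all finite metric spaces and whose edges from $X$ to $Y$ are all maps $X\to Y$ that are either isometries (metric-preserving bijections) or drifts. Then: (i) two finite metric spaces are isotypic in $\mathcal M$ if and only if they are isometric; (ii) a finite metric space is a primitive vertex of $\mathcal M$ if and only if it is trim; (iii) $\mathcal M$ is a phylogenetic quiver; (iv) every vertex of $\mathcal M$ is regular.
   Context: A quiver consists of a class of vertices and, for each ordered pair of vertices $(A,B)$, a set of edges $A\to B$ (loops and multiple edges allowed). An evolution of length $m\ge 0$ is a sequence $A_0\leftarrow A_1\leftarrow\cdots\leftarrow A_m$ of vertices together with edges $A_k\to A_{k-1}$ ($1\le k\le m$); $A_0$ is its initial and $A_m$ its terminal vertex. Write $A\le B$ ($A$ is an ancestor of $B$, $B$ a descendant of $A$) if there is an evolution with initial vertex $A$ and terminal vertex $B$; $A,B$ are isotypic ($A\sim B$) if $A\le B$ and $B\le A$. A vertex $A$ is primitive if every ancestor of $A$ is isotypic to $A$. A full evolution for $X$ is an evolution with primitive initial vertex and terminal vertex $X$. The height $h(X)$ is the smallest length of a full evolution for $X$ ($h(X)=\infty$ if none exists). An evolution $\alpha=(A_0\leftarrow\cdots\leftarrow A_m)$ embeds in $\beta=(B_0\leftarrow\cdots\leftarrow B_n)$ if $m\le n$ and there are integers $0\le r_0<r_1<\cdots<r_m\le n$ with $A_k\sim B_{r_k}$ for all $k$. A universal evolution for $X$ is a full evolution for $X$ that embeds in every full evolution for $X$; $X$ is phylogenetic if it has a universal evolution. A quiver is monotonous if $h(A)\ge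 h(B)$ for every edge $A\to B$; it is small if the isotypy classes of its vertices form a set; it is phylogenetic if it is small, monotonous, and all its vertices are phylogenetic. The clade $\mathcal O_A$ of a vertex $A$ is the quiver formed by all descendants of $A$ and all edges between them. A vertex $A$ is regular if for every $B$ in $\mathcal O_A$ with $h(B)=h(A)$ there is an edge $B\to A$. Metric spaces have non-empty underlying sets. For a metric space $(X,d)$ define $\underline d:X\to\mathbb R_+$ by: $\underline d=0$ if $X$ has one point; $\underline d(x)=\underline d(y)=d(x,y)/2$ if $X=\{x,y\}$ has two points; and if $X$ has at least three points, $\underline d(x)=\inf_{y,z\in X\setminus\{x\},\,y\neq z}\frac{d(x,y)+d(x,z)-d(y,z)}{2}$. A metric space is trim if $\underline d\equiv 0$ (equivalently, it has one point or every $x$ lies between two distinct other points $y,z$, i.e. $d(x,y)+d(x,z)=d(y,z)$). A map $f:(X,d)\to(Y,\rho)$ is a drift if $f(X)=Y$ and $\rho(f(x),f(y))=d(x,y)-\underline d(x)-\underline d(y)$ for all distinct $x,y\in X$. *)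

(* Defs.v *)
From Stdlib Require Import Reals List.
Open Scope R_scope.

Section Quiver.
Variable V : Type.
Variable E : V -> V -> Type.

(* An evolution A_0 <- A_1 <- ... <- A_m: length m, vertices vx 0..vx m
   (values of vx beyond m are irrelevant), and edges A_{k+1} -> A_k. *)
Record evolution := {
  ev_len : nat;
  ev_vx : nat -> V;
  ev_edge : forall k : nat, (k < ev_len)%nat -> E (ev_vx (S k)) (ev_vx k)
}.

Definition initial (a : evolution) : V := ev_vx a 0.
Definition terminal (a : evolution) : V := ev_vx a (ev_len a).

Definition ancestor (A B : V) : Prop :=
  exists a : evolution, initial a = A /\ terminal a = B.

Definition isotypic (A B : V) : Prop := ancestor A B /\ ancestor B A.

Definition primitive_vertex (A : V) : Prop :=
  forall B, ancestor B A -> isotypic B A.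

Definition full_evolution (a : evolution) (X : V) : Prop :=
  primitive_vertex (initial a) /\ terminal a = X.

(* height: Some n = finite height n, None = infinity *)
Definition has_height (X : V) (o : option nat) : Prop :=
  match o with
  | None => ~ exists a, full_evolution a X
  | Some n => (exists a, full_evolution a X /\ ev_len a = n) /\
              (forall a, full_evolution a X -> (n <= ev_len a)%nat)
  end.

Definition ole (o1 o2 : option nat) : Prop :=
  match o1, o2 with
  | _, None => True
  | None, Some _ => False
  | Some m, Some n => (m <= n)%nat
  end.

Definition embeds (a b : evolution) : Prop :=
  (ev_len a <= ev_len b)%nat /\
  exists r : nat -> nat,
    (forall k, (k < ev_len a)%nat -> (r k < r (S k))%nat) /\
    (r (ev_len a) <= ev_len b)%nat /\
    (forall k, (k <= ev_len a)%nat -> isotypic (ev_vx a k) (ev_vx b (r k))).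

Definition universal_evolution (a : evolution) (X : V) : Prop :=
  full_evolution a X /\ forall b, full_evolution b X -> embeds a b.

Definition phylogenetic_vertex (X : V) : Prop :=
  exists a, universal_evolution a X.

Definition monotonous : Prop :=
  forall (A B : V) (e : E A B) (oA oB : option nat),
    has_height A oA -> has_height B oB -> ole oB oA.

(* small: the isotypy classes form a set, i.e. are indexed by a type in Set *)
Definition small : Prop :=
  exists (I : Set) (f : I -> V), forall v : V, exists i : I, isotypic (f i) v.

Definition phylogenetic_quiver : Prop :=
  small /\ monotonous /\ forall X, phylogenetic_vertex X.

(* B is in the clade O_A iff A <= B; edges of the clade are all edges
   between its vertices. Heights are those of the ambient quiver. *)
Definition in_clade (A B : V) : Prop := ancestor A B.

Definition regular (A : V) : Prop :=
  forall B, in_clade A B ->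
    (forall o, has_height A o -> has_height B o) ->
    inhabited (E B A).

End Quiver.

Arguments initial {V E}.
Arguments terminal {V E}.
Arguments ancestor {V} E.
Arguments isotypic {V} E.
Arguments primitive_vertex {V} E.
Arguments phylogenetic_quiver {V} E.
Arguments regular {V} E.

Record FinMetric := {
  pt : Type;
  dist : pt -> pt -> R;
  pt_finite : exists l : list pt, forall x, In x l;
  pt_nonempty : inhabited pt;
  dist_zero : forall x y, dist x y = 0 <-> x = y;
  dist_sym : forall x y, dist x y = dist y x;
  dist_tri : forall x y z, dist x z <= dist x y + dist y z
}.

Definition ud_is (M : FinMetric) (x : pt M) (r : R) : Prop :=
  ((forall y : pt M, y = x) /\ r = 0)
  \/ (exists y : pt M, y <> x /\ (forall z, z = x \/ z = y) /\
        r = dist M x y / 2)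
  \/ ((exists y z : pt M, y <> x /\ z <> x /\ y <> z) /\
      (forall y z : pt M, y <> x -> z <> x -> y <> z ->
          r <= (dist M x y + dist M x z - dist M y z) / 2) /\
      (forall b : R, (forall y z : pt M, y <> x -> z <> x -> y <> z ->
          b <= (dist M x y + dist M x z - dist M y z) / 2) -> b <= r)).

Definition trim (M : FinMetric) : Prop := forall x : pt M, ud_is M x 0.

Definition bijective_map {A B : Type} (f : A -> B) : Prop :=
  (forall x y, f x = f y -> x = y) /\ (forall y, exists x, f x = y).

Definition is_isometry (X Y : FinMetric) (f : pt X -> pt Y) : Prop :=
  bijective_map f /\ forall x y, dist Y (f x) (f y) = dist X x y.

Definition isometric (X Y : FinMetric) : Prop :=
  exists f : pt X -> pt Y, is_isometry X Y f.

Definition is_drift (X Y : FinMetric) (f : pt X -> pt Y) : Prop :=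
  (forall y, exists x, f x = y) /\
  forall x y : pt X, x <> y ->
    exists rx ry, ud_is X x rx /\ ud_is X y ry /\
      dist Y (f x) (f y) = dist X x y - rx - ry.

Definition MEdge (X Y : FinMetric) : Type :=
  { f : pt X -> pt Y | is_isometry X Y f \/ is_drift X Y f }.

(* Main.v *)
Require Import Defs.
From Stdlib Require Import Reals List Lra Lia Classical ClassicalEpsilon ProofIrrelevance Permutation FunctionalExtensionality PropExtensionality.
Import Defs.
Open Scope R_scope.

Definition dec {A:Type} (x y : A) : {x = y} + {x <> y} := excluded_middle_informative (x = y).

Lemma dist_refl (X:FinMetric) x : dist X x x = 0.
Proof. apply dist_zero. reflexivity. Qed.
Lemma dist_nonneg X x y : 0 <= dist X x y.
Proof. pose proof (dist_tri X x y x) as H. rewrite dist_refl, (dist_sym X y x) in H. lra. Qed.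

Lemma ud_unique X x r1 r2 : ud_is X x r1 -> ud_is X x r2 -> r1 = r2.
Proof.
  intros [[H1 ->]|[[y [Hy [H1 ->]]]|[[y [z [Hy [Hz Hyz]]]] [H1 H1']]]]
         [[H2 ->]|[[y' [Hy' [H2 ->]]]|[[y' [z' [Hy' [Hz' Hyz']]]] [H2 H2']]]].
  all: try reflexivity.
  all: try (exfalso; solve [apply Hy; apply H1 | apply Hy; apply H2 | apply Hy'; apply H1 | apply Hy'; apply H2]).
  - destruct (H1 y') as [?|?]; [congruence|subst; reflexivity].
  - exfalso. destruct (H1 y') as [?|?]; destruct (H1 z') as [?|?]; congruence.
  - exfalso. destruct (H2 y) as [?|?]; destruct (H2 z) as [?|?]; congruence.
  - apply Rle_antisym; [apply H2'; exact H1 | apply H1'; exact H2].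
Qed.

Lemma ud_exists X x : exists r, ud_is X x r.
Proof.
  destruct (classic (forall y, y = x)) as [H|H].
  { exists 0. left. auto. }
  apply not_all_ex_not in H as [y Hy].
  destruct (classic (forall z, z = x \/ z = y)) as [H|H].
  { exists (dist X x y / 2). right; left. exists y. auto. }
  apply not_all_ex_not in H as [z Hz].
  apply not_or_and in Hz as [Hzx Hzy].
  set (E := fun b => forall y z : pt X, y <> x -> z <> x -> y <> z ->
          b <= (dist X x y + dist X x z - dist X y z) / 2).
  destruct (completeness E) as [m [Hm1 Hm2]].
  { exists ((dist X x y + dist X x z - dist X y z) / 2). intros b Hb.
    apply Hb; auto. }
  { exists 0. intros a b _ _ _. pose proof (dist_tri X a x b).
    rewrite (dist_sym X a x) in H. lra. }
  exists m. right; right. split; [|split].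
  - exists y, z. auto.
  - intros a b Ha Hb Hab. apply Hm2. intros c Hc. apply Hc; auto.
  - intros b Hb. apply Hm1. exact Hb.
Qed.

Definition u (X:FinMetric) (x:pt X) : R :=
  proj1_sig (constructive_indefinite_description _ (ud_exists X x)).
Lemma u_spec X x : ud_is X x (u X x).
Proof. unfold u. destruct constructive_indefinite_description. assumption. Qed.
Lemma u_eq X x r : ud_is X x r -> u X x = r.
Proof. intros H. eapply ud_unique; [apply u_spec|exact H]. Qed.

Lemma ud_nonneg X x r : ud_is X x r -> 0 <= r.
Proof.
  intros [[H ->]|[[y [Hy [H1 ->]]]|[[y [z [Hy [Hz Hyz]]]] [H1 H1']]]].
  - lra.
  - pose proof (dist_nonneg X x y). lra.
  - apply H1'. intros a b _ _ _. pose proof (dist_tri X a x b).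
    rewrite (dist_sym X a x) in H. lra.
Qed.

Lemma ud_three X x y z r : y <> x -> z <> x -> y <> z -> ud_is X x r ->
  r <= (dist X x y + dist X x z - dist X y z) / 2.
Proof.
  intros Hy Hz Hyz [[H ->]|[[y0 [Hy0 [H1 ->]]]|[_ [H1 _]]]].
  - exfalso. apply Hy, H.
  - exfalso. destruct (H1 y); destruct (H1 z); congruence.
  - apply H1; auto.
Qed.

Lemma ud_pair X x y rx ry : x <> y -> ud_is X x rx -> ud_is X y ry ->
  rx + ry <= dist X x y.
Proof.
  intros Hxy Hx Hy. pose proof Hx as Hx0.
  destruct Hx as [[H ->]|[[y0 [Hy0 [H1 ->]]]|[[y1 [z1 [Hy1 [Hz1 Hyz1]]]] _]]].
  - exfalso. apply Hxy. symmetry. apply H.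
  - destruct (H1 y) as [?|?]; [congruence|subst y0].
    assert (ry = dist X y x / 2).
    { eapply ud_unique; [exact Hy|]. right; left. exists x. split; auto.
      split; auto. intros z. destruct (H1 z); auto. }
    subst. rewrite (dist_sym X y x). lra.
  - assert (exists w, w <> x /\ w <> y) as [w [Hw1 Hw2]].
    { destruct (dec y1 y). subst. exists z1. auto. exists y1. auto. }
    pose proof (ud_three X x y w rx (not_eq_sym Hxy) Hw1 (not_eq_sym Hw2) Hx0).
    pose proof (ud_three X y x w ry Hxy Hw2 (not_eq_sym Hw1) Hy).
    rewrite (dist_sym X y x) in H0. lra.
Qed.

Lemma ud_mid X x y z r : x <> y -> y <> z -> x <> z -> ud_is X y r ->
  2 * r <= dist X x y + dist X y z - dist X x z.
Proof.
  intros H1 H2 H3 H. pose proof (ud_three X y x z r H1 (not_eq_sym H2) H3 H).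
  rewrite (dist_sym X y x) in H0. lra.
Qed.

Lemma finite_attain {A:Type} (l : list A) (P : A -> Prop) (v : A -> R) (r : R) :
  (forall a, P a -> r < v a) ->
  exists e, e > 0 /\ forall a, In a l -> P a -> r + e <= v a.
Proof.
  intros H. induction l as [|a l IH].
  - exists 1. split; [lra|]. intros a []. 
  - destruct IH as [e [He IH]].
    destruct (classic (P a)) as [Pa|nPa].
    + pose proof (H a Pa). exists (Rmin e (v a - r)). split.
      { apply Rmin_pos; lra. }
      intros b [<-|Hb] Pb.
      * pose proof (Rmin_r e (v a - r)). lra.
      * pose proof (Rmin_l e (v a - r)). specialize (IH b Hb Pb). lra.
    + exists e. split; auto. intros b [<-|Hb] Pb; [contradiction|auto].
Qed.

Lemma ud_attain X x r : ud_is X x r ->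
  (exists y z, y <> x /\ z <> x /\ y <> z) ->
  exists y z, y <> x /\ z <> x /\ y <> z /\
     r = (dist X x y + dist X x z - dist X y z) / 2.
Proof.
  intros Hr Hex. apply NNPP. intros Hn.
  destruct Hex as [y0 [z0 [Hy0 [Hz0 Hyz0]]]].
  destruct Hr as [[H ->]|[[y [Hy [H1 ->]]]|[_ [H1 H1']]]].
  - apply Hy0, H.
  - destruct (H1 y0); destruct (H1 z0); congruence.
  - destruct (pt_finite X) as [l Hl].
    destruct (finite_attain (list_prod l l)
      (fun p => fst p <> x /\ snd p <> x /\ fst p <> snd p)
      (fun p => (dist X x (fst p) + dist X x (snd p) - dist X (fst p) (snd p)) / 2) r)
      as [e [He Hall]].
    { intros [a b] [Ha [Hb Hab]]. simpl in *.
      destruct (Rle_lt_or_eq_dec _ _ (H1 a b Ha Hb Hab)) as [?|?]; auto.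
      exfalso. apply Hn. exists a, b. auto. }
    assert (r + e <= r).
    { apply H1'. intros a b Ha Hb Hab.
      apply (Hall (a, b)); [apply in_prod; auto | simpl; auto]. }
    lra.
Qed.

Lemma ud_between X a b c : b <> a -> c <> a -> b <> c ->
  dist X a b + dist X a c = dist X b c -> ud_is X a 0.
Proof.
  intros Hb Hc Hbc Heq. right; right. split; [|split].
  - exists b, c. auto.
  - intros y z _ _ _. pose proof (dist_tri X y a z).
    rewrite (dist_sym X y a) in H. lra.
  - intros b' Hb'. specialize (Hb' b c Hb Hc Hbc). lra.
Qed.
Lemma sig_ext {A:Type} {P:A->Prop} (a b : {x:A | P x}) : proj1_sig a = proj1_sig b -> a = b.
Proof. destruct a as [a Ha], b as [b Hb]; simpl. intros ->. f_equal. apply proof_irrelevance. Qed.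

Lemma iso_id X : is_isometry X X (fun x => x).
Proof. split; [split|]; eauto. Qed.

Lemma iso_comp X Y Z f g : is_isometry X Y f -> is_isometry Y Z g ->
  is_isometry X Z (fun x => g (f x)).
Proof.
  intros [[fi fs] fd] [[gi gs] gd]. split; [split|].
  - intros x y H. apply fi, gi, H.
  - intros z. destruct (gs z) as [y <-]. destruct (fs y) as [x <-]. eauto.
  - intros x y. rewrite gd, fd. reflexivity.
Qed.

Lemma iso_of_dp_surj X Y f : (forall y, exists x, f x = y) ->
  (forall x y, dist Y (f x) (f y) = dist X x y) -> is_isometry X Y f.
Proof.
  intros fs fd. split; [split|]; auto.
  intros x y H. apply dist_zero. rewrite <- fd, H. apply dist_refl.
Qed.

Lemma iso_inv X Y f : is_isometry X Y f -> exists g, is_isometry Y X g /\ forall x, g (f x) = x.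
Proof.
  intros [[fi fs] fd].
  exists (fun y => proj1_sig (constructive_indefinite_description _ (fs y))).
  assert (Hg : forall y, f (proj1_sig (constructive_indefinite_description _ (fs y))) = y).
  { intros y. destruct constructive_indefinite_description. auto. }
  split.
  - apply iso_of_dp_surj.
    + intros x. exists (f x). apply fi. rewrite Hg. reflexivity.
    + intros a b. rewrite <- fd, !Hg. reflexivity.
  - intros x. apply fi. rewrite Hg. reflexivity.
Qed.

Lemma isometric_refl X : isometric X X.
Proof. exists (fun x => x). apply iso_id. Qed.
Lemma isometric_sym X Y : isometric X Y -> isometric Y X.
Proof. intros [f Hf]. destruct (iso_inv _ _ _ Hf) as [g [Hg _]]. exists g. auto. Qed.
Lemma isometric_trans X Y Z : isometric X Y -> isometric Y Z -> isometric X Z.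
Proof. intros [f Hf] [g Hg]. eexists. eapply iso_comp; eauto. Qed.

Lemma ud_back A B (phi : pt A -> pt B) x r : is_isometry A B phi ->
  ud_is B (phi x) r -> ud_is A x r.
Proof.
  intros [[pi ps] pd].
  intros [[H ->]|[[y0 [Hy0 [H1 ->]]]|[[y1 [z1 [Hy1 [Hz1 Hyz1]]]] [H1 H1']]]].
  - left. split; [intros y; apply pi, H|reflexivity].
  - destruct (ps y0) as [y <-]. right; left. exists y.
    split; [intros ->; auto|]. split; [|rewrite pd; reflexivity].
    intros z. destruct (H1 (phi z)) as [E|E]; apply pi in E; auto.
  - destruct (ps y1) as [y <-]. destruct (ps z1) as [z <-].
    right; right. split; [|split].
    + exists y, z. split; [intros ->; auto|]. split; [intros ->; auto|].
      intros ->; auto.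
    + intros a b Ha Hb Hab. rewrite <- !pd. apply H1.
      * intros E; apply pi in E; auto.
      * intros E; apply pi in E; auto.
      * intros E; apply pi in E; auto.
    + intros b' Hb'. apply H1'. intros c d Hc Hd Hcd.
      destruct (ps c) as [a <-]. destruct (ps d) as [b <-]. rewrite !pd.
      apply Hb'; intros ->; auto.
Qed.

Lemma trim_iso X Y : isometric X Y -> trim Y -> trim X.
Proof. intros [f Hf] HY x. eapply ud_back; [exact Hf|apply HY]. Qed.

Definition rho X (x y : pt X) : R := if dec x y then 0 else dist X x y - u X x - u X y.

Lemma rho_self X x : rho X x x = 0.
Proof. unfold rho. destruct (dec x x); [reflexivity|congruence]. Qed.
Lemma rho_neq X x y : x <> y -> rho X x y = dist X x y - u X x - u X y.
Proof. intros H. unfold rho. destruct (dec x y); [congruence|reflexivity]. Qed.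
Lemma rho_nonneg X x y : 0 <= rho X x y.
Proof.
  destruct (dec x y) as [->|H]; [rewrite rho_self; lra|].
  rewrite rho_neq by auto. pose proof (ud_pair X x y _ _ H (u_spec X x) (u_spec X y)). lra.
Qed.
Lemma rho_sym X x y : rho X x y = rho X y x.
Proof.
  destruct (dec x y) as [->|H]; [reflexivity|].
  rewrite !rho_neq by auto. rewrite dist_sym. lra.
Qed.
Lemma rho_tri X x y z : rho X x z <= rho X x y + rho X y z.
Proof.
  destruct (dec x z) as [->|Hxz].
  { rewrite rho_self. pose proof (rho_nonneg X z y). pose proof (rho_nonneg X y z). lra. }
  destruct (dec x y) as [->|Hxy].
  { rewrite rho_self. lra. }
  destruct (dec y z) as [->|Hyz].
  { rewrite rho_self. lra. }
  rewrite !rho_neq by auto.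
  pose proof (ud_mid X x y z _ Hxy Hyz Hxz (u_spec X y)). lra.
Qed.
Lemma rho_class X x y z : rho X x y = 0 -> rho X x z = rho X y z.
Proof.
  intros H. pose proof (rho_tri X x y z). pose proof (rho_tri X y x z).
  pose proof H as Hs. rewrite rho_sym in Hs. lra.
Qed.

Definition cls X (x : pt X) : pt X -> Prop := fun z => rho X x z = 0.
Definition rep X (x : pt X) : pt X := epsilon (pt_nonempty X) (cls X x).
Lemma rep_spec X x : rho X x (rep X x) = 0.
Proof. unfold rep. apply (epsilon_spec (pt_nonempty X) (cls X x)). exists x. unfold cls. apply rho_self. Qed.
Lemma rep_eq X x y : rho X x y = 0 -> rep X x = rep X y.
Proof.
  intros H. unfold rep. f_equal. apply functional_extensionality. intros z.
  apply propositional_extensionality. unfold cls. rewrite (rho_class X x y z H). tauto.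
Qed.
Lemma rep_idem X x : rep X (rep X x) = rep X x.
Proof. symmetry. apply rep_eq, rep_spec. Qed.
Lemma rho_rep X x y : rho X (rep X x) (rep X y) = rho X x y.
Proof.
  rewrite <- (rho_class X x (rep X x) (rep X y) (rep_spec X x)).
  rewrite (rho_sym X x (rep X y)), (rho_sym X x y).
  rewrite <- (rho_class X y (rep X y) x (rep_spec X y)). reflexivity.
Qed.

Definition Dpt X := {x : pt X | rep X x = x}.
Definition Ddist X (a b : Dpt X) : R := rho X (proj1_sig a) (proj1_sig b).
Definition dmap X (x : pt X) : Dpt X := exist _ (rep X x) (rep_idem X x).

Lemma dmap_fix X (a : Dpt X) : dmap X (proj1_sig a) = a.
Proof. apply sig_ext. simpl. apply (proj2_sig a). Qed.

Lemma D_finite X : exists l : list (Dpt X), forall x, In x l.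
Proof.
  destruct (pt_finite X) as [l Hl]. exists (map (dmap X) l). intros a.
  rewrite <- (dmap_fix X a). apply in_map, Hl.
Qed.
Lemma D_nonempty X : inhabited (Dpt X).
Proof. destruct (pt_nonempty X) as [x]. constructor. exact (dmap X x). Qed.
Lemma D_zero X (a b : Dpt X) : Ddist X a b = 0 <-> a = b.
Proof.
  split.
  - intros H. apply sig_ext. destruct a as [a Ha], b as [b Hb]. simpl in *.
    rewrite <- Ha, <- Hb. apply rep_eq, H.
  - intros ->. apply rho_self.
Qed.
Lemma D_sym X (a b : Dpt X) : Ddist X a b = Ddist X b a.
Proof. apply rho_sym. Qed.
Lemma D_tri X (a b c : Dpt X) : Ddist X a c <= Ddist X a b + Ddist X b c.
Proof. apply rho_tri. Qed.

Definition D (X : FinMetric) : FinMetric :=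
  {| pt := Dpt X; dist := Ddist X; pt_finite := D_finite X; pt_nonempty := D_nonempty X;
     dist_zero := D_zero X; dist_sym := D_sym X; dist_tri := D_tri X |}.

Lemma dmap_drift X : is_drift X (D X) (dmap X).
Proof.
  split.
  - intros a. exists (proj1_sig a). apply dmap_fix.
  - intros x y H. exists (u X x), (u X y). split; [apply u_spec|]. split; [apply u_spec|].
    simpl. unfold Ddist. simpl. rewrite rho_rep. apply rho_neq, H.
Qed.

Definition drift_rel X Y := exists f, is_drift X Y f.

Lemma drift_rho X Y f : is_drift X Y f -> forall x y, dist Y (f x) (f y) = rho X x y.
Proof.
  intros [_ Hd] x y. destruct (dec x y) as [->|H].
  - rewrite rho_self. apply dist_refl.
  - destruct (Hd x y H) as [rx [ry [Hx [Hy E]]]]. rewrite rho_neq by auto.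
    rewrite E, (u_eq _ _ _ Hx), (u_eq _ _ _ Hy). reflexivity.
Qed.

Lemma rho_le X x y : rho X x y <= dist X x y.
Proof.
  destruct (dec x y) as [->|H]; [rewrite rho_self, dist_refl; lra|].
  rewrite rho_neq by auto. pose proof (ud_nonneg _ _ _ (u_spec X x)).
  pose proof (ud_nonneg _ _ _ (u_spec X y)). lra.
Qed.

Lemma DU X Y Z f g : is_drift X Y f -> is_drift X Z g -> isometric Y Z.
Proof.
  intros Hf Hg. pose proof (drift_rho _ _ _ Hf) as Ef. pose proof (drift_rho _ _ _ Hg) as Eg.
  destruct Hf as [fs _]. destruct Hg as [gs _].
  exists (fun b => g (proj1_sig (constructive_indefinite_description _ (fs b)))).
  assert (Hp : forall b, f (proj1_sig (constructive_indefinite_description _ (fs b))) = b).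
  { intros b. destruct constructive_indefinite_description. auto. }
  apply iso_of_dp_surj.
  - intros c. destruct (gs c) as [x <-]. exists (f x).
    apply dist_zero. rewrite Eg, <- Ef, Hp. apply dist_refl.
  - intros a b. rewrite Eg, <- Ef, !Hp. reflexivity.
Qed.

Lemma DT X Y f : trim X -> is_drift X Y f -> is_isometry X Y f.
Proof.
  intros HX Hf. pose proof (drift_rho _ _ _ Hf) as E. destruct Hf as [fs _].
  apply iso_of_dp_surj; auto. intros x y. rewrite E.
  destruct (dec x y) as [->|H]; [rewrite rho_self, dist_refl; reflexivity|].
  rewrite rho_neq by auto. rewrite (u_eq _ _ _ (HX x)), (u_eq _ _ _ (HX y)). lra.
Qed.

Lemma DI X' X Y phi f : is_isometry X' X phi -> is_drift X Y f ->
  is_drift X' Y (fun x => f (phi x)).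
Proof.
  intros Hp Hf. pose proof Hp as [[pi ps] pd]. destruct Hf as [fs fd]. split.
  - intros y. destruct (fs y) as [x <-]. destruct (ps x) as [x' <-]. eauto.
  - intros x y H. assert (phi x <> phi y) by (intros E; apply pi in E; auto).
    destruct (fd _ _ H0) as [rx [ry [Hx [Hy E]]]]. exists rx, ry.
    split; [eapply ud_back; eauto|]. split; [eapply ud_back; eauto|].
    rewrite E, pd. reflexivity.
Qed.

Lemma drift_rel_iso X' X Y : isometric X' X -> drift_rel X Y -> drift_rel X' Y.
Proof. intros [p Hp] [f Hf]. eexists. eapply DI; eauto. Qed.

Lemma two_point X x y : x <> y -> (forall z, z = x \/ z = y) -> u X x + u X y = dist X x y.
Proof.
  intros Hxy H. rewrite (u_eq X x (dist X x y / 2)), (u_eq X y (dist X y x / 2)).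
  - rewrite (dist_sym X y x). lra.
  - right; left. exists x. split; auto. split; auto. intros z. destruct (H z); auto.
  - right; left. exists y. auto.
Qed.

Lemma drift_inj_trim X Y f : is_drift X Y f -> (forall x y, f x = f y -> x = y) -> trim Y.
Proof.
  intros Hf fi. pose proof (drift_rho _ _ _ Hf) as E. pose proof Hf as [fs _].
  intros b. destruct (fs b) as [x <-].
  destruct (u_spec X x) as [[H _]|[[y [Hy [H1 _]]]|[[y1 [z1 [Hy1 [Hz1 Hyz1]]]] _]]].
  - left. split; auto. intros c. destruct (fs c) as [z <-]. rewrite (H z). reflexivity.
  - exfalso. apply Hy, fi. apply dist_zero. rewrite E. rewrite rho_neq by auto.
    assert (Q : forall z, z = y \/ z = x) by (intros z; destruct (H1 z); auto).
    pose proof (two_point X y x Hy Q). lra.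
  - destruct (ud_attain X x _ (u_spec X x)) as [y [z [Hy [Hz [Hyz Eu]]]]].
    { exists y1, z1. auto. }
    apply (ud_between Y (f x) (f y) (f z)).
    + intros Q; apply fi in Q; auto.
    + intros Q; apply fi in Q; auto.
    + intros Q; apply fi in Q; auto.
    + rewrite !E, !rho_neq by auto. lra.
Qed.

Lemma drift_nonexp X Y f : is_drift X Y f -> forall x y, dist Y (f x) (f y) <= dist X x y.
Proof. intros Hf x y. rewrite (drift_rho _ _ _ Hf). apply rho_le. Qed.
Fixpoint lsum {A:Type} (f : A -> R) (l : list A) : R :=
  match l with nil => 0 | a :: l => f a + lsum f l end.

Lemma lsum_perm {A} (f : A -> R) l l' : Permutation l l' -> lsum f l = lsum f l'.
Proof. induction 1; simpl; lra. Qed.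
Lemma lsum_map {A B} (f : B -> R) (g : A -> B) l : lsum f (map g l) = lsum (fun x => f (g x)) l.
Proof. induction l; simpl; congruence. Qed.
Lemma lsum_le {A} (f g : A -> R) l : (forall x, In x l -> f x <= g x) -> lsum f l <= lsum g l.
Proof.
  induction l as [|a l IH]; simpl; intros H; [lra|].
  pose proof (H a (or_introl eq_refl)). pose proof (IH (fun x Hx => H x (or_intror Hx))). lra.
Qed.
Lemma lsum_eq_le {A} (f g : A -> R) l : (forall x, In x l -> f x <= g x) ->
  lsum f l = lsum g l -> forall x, In x l -> f x = g x.
Proof.
  induction l as [|a l IH]; simpl; intros H E x Hx; [contradiction|].
  pose proof (H a (or_introl eq_refl)).
  pose proof (lsum_le f g l (fun x Hx => H x (or_intror Hx))).
  destruct Hx as [<-|Hx]; [lra|]. apply IH; auto. lra.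
Qed.
Lemma lsum_ext {A} (f g : A -> R) l : (forall x, In x l -> f x = g x) -> lsum f l = lsum g l.
Proof. induction l; simpl; intros H; auto. rewrite H, IHl; auto. Qed.

Lemma nonexp_surj_iso X (g : pt X -> pt X) : (forall y, exists x, g x = y) ->
  (forall x y, dist X (g x) (g y) <= dist X x y) -> is_isometry X X g.
Proof.
  intros gs gn. apply iso_of_dp_surj; auto.
  destruct (pt_finite X) as [l0 Hl0].
  set (l := nodup dec l0).
  assert (Hl : forall x, In x l) by (intros x; apply nodup_In, Hl0).
  assert (Nl : NoDup l) by apply NoDup_nodup.
  assert (P : Permutation l (map g l)).
  { apply NoDup_Permutation_bis; auto.
    - rewrite length_map. lia.
    - intros y _. destruct (gs y) as [x <-]. apply in_map, Hl. }
  assert (Sum : lsum (fun x => lsum (fun y => dist X (g x) (g y)) l) l =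
                lsum (fun x => lsum (fun y => dist X x y) l) l).
  { transitivity (lsum (fun x => lsum (fun y => dist X (g x) y) l) l).
    - apply lsum_ext. intros x _. rewrite (lsum_perm (fun y => dist X (g x) y) _ _ P), lsum_map. reflexivity.
    - rewrite (lsum_perm (fun x => lsum (fun y => dist X x y) l) _ _ P), lsum_map. reflexivity. }
  intros x y.
  assert (E1 := lsum_eq_le _ _ l (fun x _ => lsum_le _ _ l (fun y _ => gn x y)) Sum x (Hl x)).
  simpl in E1.
  apply (lsum_eq_le (fun y => dist X (g x) (g y)) (fun y => dist X x y) l (fun y _ => gn x y) E1 y (Hl y)).
Qed.

Notation Ev := (evolution FinMetric MEdge).
Definition len (b : Ev) := ev_len _ _ b.
Definition vx (b : Ev) := ev_vx _ _ b.
Definition edge (b : Ev) := ev_edge _ _ b.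

Definition idedge (B : FinMetric) : MEdge B B := exist _ (fun x => x) (or_introl (iso_id B)).

Definition ev1 (A B : FinMetric) (e : MEdge B A) : Ev :=
  Build_evolution FinMetric MEdge 1 (fun k => match k with 0 => A | _ => B end)
    (fun k => match k as k0 return (k0 < 1)%nat ->
               MEdge (match S k0 with 0 => A | _ => B end) (match k0 with 0 => A | _ => B end) with
              | 0 => fun _ => e | S _ => fun _ => idedge B end).

Lemma ancestor_edge A B (e : MEdge B A) : ancestor MEdge A B.
Proof. exists (ev1 A B e). split; reflexivity. Qed.

Definition surjnx (X Y : FinMetric) (g : pt X -> pt Y) :=
  (forall y, exists x, g x = y) /\ forall x y, dist Y (g x) (g y) <= dist X x y.

Lemma edge_surjnx A B (e : MEdge A B) : surjnx A B (proj1_sig e).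
Proof.
  destruct e as [f [[[fi fs] fd]|Hd]]; simpl.
  - split; auto. intros; rewrite fd; lra.
  - split; [apply Hd|]. apply drift_nonexp, Hd.
Qed.

Lemma surjnx_comp X Y Z f g : surjnx X Y f -> surjnx Y Z g -> surjnx X Z (fun x => g (f x)).
Proof.
  intros [fs fn] [gs gn]. split.
  - intros z. destruct (gs z) as [y <-]. destruct (fs y) as [x <-]. eauto.
  - intros x y. eapply Rle_trans; [apply gn|apply fn].
Qed.

Lemma ev_composite (b : Ev) : forall d k, (k + d = len b)%nat ->
  exists g, surjnx (vx b (len b)) (vx b k) g.
Proof.
  induction d as [|d IH]; intros k Hk.
  - replace k with (len b) by lia. exists (fun x => x). split; [eauto|intros; lra].
  - destruct (IH (S k)) as [g Hg]; [lia|].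
    exists (fun x => proj1_sig (edge b k ltac:(unfold len in Hk; lia)) (g x)).
    eapply surjnx_comp; [exact Hg|apply edge_surjnx].
Qed.

Lemma ancestor_map A B : ancestor MEdge A B -> exists g, surjnx B A g.
Proof.
  intros [b [Hi Ht]]. destruct (ev_composite b (len b) 0 eq_refl) as [g Hg].
  subst A B. exists g. exact Hg.
Qed.

Lemma iso_edge A B : isometric A B -> inhabited (MEdge A B).
Proof. intros [f Hf]. constructor. exists f. left. exact Hf. Qed.

Lemma part1 X Y : isotypic MEdge X Y <-> isometric X Y.
Proof.
  split.
  - intros [H1 H2]. destruct (ancestor_map _ _ H1) as [h [hs hn]].
    destruct (ancestor_map _ _ H2) as [k [ks kn]].
    assert (Hi : is_isometry X X (fun x => h (k x))).
    { apply nonexp_surj_iso.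
      - apply (surjnx_comp X Y X k h); split; auto.
      - intros; eapply Rle_trans; [apply hn|apply kn]. }
    exists k. apply iso_of_dp_surj; auto. intros x y. apply Rle_antisym; auto.
    destruct Hi as [_ Hd]. rewrite <- (Hd x y). apply hn.
  - intros H. split.
    + destruct (iso_edge _ _ (isometric_sym _ _ H)) as [e]. apply ancestor_edge, e.
    + destruct (iso_edge _ _ H) as [e]. apply ancestor_edge, e.
Qed.
Inductive Ht : FinMetric -> nat -> Prop :=
| Ht0 X : trim X -> Ht X 0
| HtS X Y n : ~ trim X -> drift_rel X Y -> Ht Y n -> Ht X (S n).

Lemma Ht_iso X n : Ht X n -> forall X', isometric X' X -> Ht X' n.
Proof.
  intros H. destruct H as [X HX|X Y n HX HXY HY]; intros X' Hi.
  - apply Ht0. eapply trim_iso; eauto.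
  - apply HtS with Y; auto.
    + intros T. apply HX. eapply trim_iso; [apply isometric_sym; exact Hi|exact T].
    + eapply drift_rel_iso; eauto.
Qed.

Lemma Ht_unique X n : Ht X n -> forall m, Ht X m -> n = m.
Proof.
  induction 1 as [X HX|X Y n HX HXY HY IH]; intros m Hm.
  - inversion Hm; subst; auto. contradiction.
  - inversion Hm as [X0 T|X0 Y' m' HX' HXY' HY']; subst; [contradiction|].
    f_equal. apply IH. destruct HXY as [f Hf], HXY' as [g Hg].
    eapply Ht_iso; [exact HY'|]. eapply DU; eauto.
Qed.

Lemma Ht_total_aux k : forall X (l : list (pt X)), (length l <= k)%nat -> (forall x, In x l) ->
  exists n, Ht X n.
Proof.
  induction k as [|k IH]; intros X l Hlen Hl.
  - destruct (pt_nonempty X) as [x]. destruct l; [destruct (Hl x)|simpl in Hlen; lia].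
  - destruct (classic (trim X)) as [T|NT]; [exists 0%nat; apply Ht0, T|].
    destruct (classic (forall x y, dmap X x = dmap X y -> x = y)) as [Inj|NInj].
    + exists 1%nat. apply HtS with (D X); auto. exists (dmap X); apply dmap_drift.
      apply Ht0. eapply drift_inj_trim; [apply dmap_drift|exact Inj].
    + apply not_all_ex_not in NInj as [x NInj]. apply not_all_ex_not in NInj as [y NInj].
      apply imply_to_and in NInj as [Exy Nxy].
      destruct (IH (D X) (map (dmap X) (remove dec x l))) as [n Hn].
      * rewrite length_map. pose proof (remove_length_lt dec l x (Hl x)). lia.
      * intros b. destruct (proj1 (dmap_drift X) b) as [z <-].
        destruct (dec z x) as [->|Hzx].
        -- rewrite Exy. apply in_map, in_in_remove; auto.
        -- apply in_map, in_in_remove; auto.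
      * exists (S n). apply HtS with (D X); auto. exists (dmap X); apply dmap_drift.
Qed.

Lemma Ht_total X : exists n, Ht X n.
Proof. destruct (pt_finite X) as [l Hl]. eapply Ht_total_aux; eauto. Qed.

Definition hgt X : nat := proj1_sig (constructive_indefinite_description _ (Ht_total X)).
Lemma hgt_spec X : Ht X (hgt X).
Proof. unfold hgt. destruct constructive_indefinite_description; auto. Qed.
Lemma hgt_eq X n : Ht X n -> hgt X = n.
Proof. intros H. eapply Ht_unique; [apply hgt_spec|exact H]. Qed.
Lemma hgt_iso X Y : isometric X Y -> hgt X = hgt Y.
Proof. intros H. apply hgt_eq. eapply Ht_iso; [apply hgt_spec|exact H]. Qed.
Lemma hgt_trim X : trim X <-> hgt X = 0%nat.
Proof.
  split.
  - intros T. apply hgt_eq, Ht0, T.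
  - intros E. pose proof (hgt_spec X) as H. rewrite E in H. inversion H; auto.
Qed.

Lemma edge_cases A B (e : MEdge A B) :
  isometric A B \/ (~ trim A /\ drift_rel A B /\ hgt A = S (hgt B)).
Proof.
  destruct e as [f [Hi|Hd]]; [left; exists f; exact Hi|].
  destruct (classic (trim A)) as [T|NT]; [left; exists f; eapply DT; eauto|].
  right. split; auto. split; [exists f; exact Hd|].
  pose proof (hgt_spec A) as H. inversion H as [X0 T|X0 Y n HX [g Hg] HY E1]; subst.
  - contradiction.
  - f_equal. symmetry. apply hgt_eq.
    eapply Ht_iso; [exact HY|]. eapply DU; eauto.
Qed.

Lemma chain_prop (b : Ev) : forall d k, (k + d = len b)%nat ->
  (hgt (vx b k) <= hgt (vx b (len b)))%nat /\
  (hgt (vx b k) = hgt (vx b (len b)) -> isometric (vx b (len b)) (vx b k)).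
Proof.
  unfold vx, len. induction d as [|d IH]; intros k Hk.
  - replace k with (ev_len _ _ b) by lia. split; auto. intros _. apply isometric_refl.
  - destruct (IH (S k)) as [IH1 IH2]; [lia|].
    destruct (edge_cases _ _ (edge b k ltac:(unfold len in Hk; lia))) as [Hi|[_ [_ E]]].
    + rewrite <- (hgt_iso _ _ Hi). split; auto. intros E.
      eapply isometric_trans; [apply IH2, E|exact Hi].
    + rewrite E in IH1. split; [lia|]. intros E2. lia.
Qed.

Lemma part2 X : primitive_vertex MEdge X <-> trim X.
Proof.
  split.
  - intros P. apply NNPP. intros NT.
    assert (Hd := dmap_drift X).
    assert (Anc : ancestor MEdge (D X) X).
    { apply ancestor_edge. exists (dmap X). right. exact Hd. }
    destruct (proj1 (part1 _ _) (P _ Anc)) as [k [[ki ks] kd]].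
    assert (Hi : is_isometry X X (fun x => k (dmap X x))).
    { apply nonexp_surj_iso.
      - intros y. destruct (ks y) as [a <-]. destruct (proj1 Hd a) as [x <-]. eauto.
      - intros x y. rewrite kd. apply drift_nonexp, Hd. }
    destruct Hi as [_ Hdist].
    apply not_all_ex_not in NT as [x Nx].
    destruct (classic (forall y, y = x)) as [All|NAll].
    { apply Nx. left. auto. }
    apply not_all_ex_not in NAll as [y Hy].
    specialize (Hdist x y). rewrite kd, (drift_rho _ _ _ Hd), rho_neq in Hdist by auto.
    pose proof (ud_nonneg _ _ _ (u_spec X x)). pose proof (ud_nonneg _ _ _ (u_spec X y)).
    assert (u X x <> 0). { intros E. apply Nx. rewrite <- E. apply u_spec. }
    lra.
  - intros T B [b [Hi Ht]].
    destruct (chain_prop b (len b) 0 eq_refl) as [C1 C2].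
    apply part1. apply isometric_sym. unfold initial, terminal, vx, len in *. subst.
    apply C2. pose proof (proj1 (hgt_trim _) T). lia.
Qed.
Fixpoint cD (X : FinMetric) (j : nat) : FinMetric :=
  match j with 0 => X | S j => D (cD X j) end.

Definition cedge X n k (Hk : (k < n)%nat) : MEdge (cD X (n - S k)) (cD X (n - k)).
Proof.
  replace (n - k)%nat with (S (n - S k)) by lia.
  exact (exist _ (dmap _) (or_intror (dmap_drift _))).
Defined.

Definition canon (X : FinMetric) : Ev :=
  Build_evolution FinMetric MEdge (hgt X) (fun k => cD X (hgt X - k)) (cedge X (hgt X)).

Lemma Ht_cD X n : Ht X n -> forall j, (j <= n)%nat -> Ht (cD X j) (n - j).
Proof.
  intros H j. induction j as [|j IH]; intros Hj.
  - simpl. rewrite Nat.sub_0_r. exact H.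
  - specialize (IH ltac:(lia)). replace (n - j)%nat with (S (n - S j)) in IH by lia.
    inversion IH as [|X0 Y m NT [g Hg] HY]; subst. simpl.
    eapply Ht_iso; [exact HY|]. eapply DU; [apply dmap_drift|exact Hg].
Qed.

Lemma hgt_cD X j : (j <= hgt X)%nat -> hgt (cD X j) = (hgt X - j)%nat.
Proof. intros Hj. apply hgt_eq, Ht_cD; auto. apply hgt_spec. Qed.

Lemma canon_full X : full_evolution FinMetric MEdge (canon X) X /\ len (canon X) = hgt X.
Proof.
  split; [split|reflexivity].
  - apply part2. unfold initial. simpl. apply hgt_trim. rewrite hgt_cD by lia. lia.
  - unfold terminal. simpl. rewrite Nat.sub_diag. reflexivity.
Qed.

Lemma step_le (b : Ev) i : (i < len b)%nat -> (hgt (vx b (S i)) <= S (hgt (vx b i)))%nat.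
Proof.
  intros Hi. destruct (edge_cases _ _ (edge b i Hi)) as [Hs|[_ [_ E]]].
  - change (isometric (vx b (S i)) (vx b i)) in Hs. rewrite (hgt_iso _ _ Hs). lia.
  - change (hgt (vx b (S i)) = S (hgt (vx b i))) in E. rewrite E. lia.
Qed.

Lemma full_h0 (b : Ev) X : full_evolution FinMetric MEdge b X -> hgt (vx b 0) = 0%nat.
Proof. intros [P _]. apply hgt_trim, part2, P. Qed.

Lemma full_len_ge (b : Ev) X : full_evolution FinMetric MEdge b X -> (hgt X <= len b)%nat.
Proof.
  intros Hf. assert (forall i, (i <= len b)%nat -> (hgt (vx b i) <= i)%nat).
  { induction i as [|i IH]; intros Hi.
    - rewrite (full_h0 b X Hf). lia.
    - pose proof (step_le b i ltac:(lia)). specialize (IH ltac:(lia)). lia. }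
  destruct Hf as [_ Ht]. unfold terminal in Ht. rewrite <- Ht. apply H. lia.
Qed.

Lemma has_height_hgt X : has_height FinMetric MEdge X (Some (hgt X)).
Proof.
  split.
  - exists (canon X). apply canon_full.
  - intros a Ha. apply (full_len_ge a X Ha).
Qed.

Lemma has_height_eq X o : has_height FinMetric MEdge X o -> o = Some (hgt X).
Proof.
  destruct o as [n|]; simpl.
  - intros [[a [Ha La]] Hmin]. f_equal. apply Nat.le_antisymm.
    + specialize (Hmin (canon X) (proj1 (canon_full X))). exact Hmin.
    + rewrite <- La. apply (full_len_ge a X Ha).
  - intros H. exfalso. apply H. exists (canon X). apply canon_full.
Qed.

Lemma least_ex (P : nat -> Prop) n : P n -> exists i, P i /\ forall j, (j < i)%nat -> ~ P j.
Proof.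
  induction n as [n IH] using (well_founded_induction Wf_nat.lt_wf). intros Pn.
  destruct (classic (exists j, (j < n)%nat /\ P j)) as [[j [Hj Pj]]|N].
  - apply (IH j Hj Pj).
  - exists n. split; auto. intros j Hj Pj. apply N. eauto.
Qed.

Lemma iso_chain (b : Ev) X : terminal b = X -> forall d i, (i + d = len b)%nat ->
  (hgt (vx b i) <= hgt X)%nat /\ isometric (vx b i) (cD X (hgt X - hgt (vx b i))).
Proof.
  intros Ht. induction d as [|d IH]; intros i Hi.
  - replace i with (len b) by lia. unfold terminal in Ht. unfold vx, len. rewrite Ht.
    rewrite Nat.sub_diag. split; auto. apply isometric_refl.
  - destruct (IH (S i) ltac:(lia)) as [IH1 IH2].
    destruct (edge_cases _ _ (edge b i ltac:(unfold len in Hi; lia))) as [Hs|[NT [Hd E]]].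
    + change (isometric (vx b (S i)) (vx b i)) in Hs.
      rewrite <- (hgt_iso _ _ Hs). split; auto.
      eapply isometric_trans; [apply isometric_sym, Hs|exact IH2].
    + change (hgt (vx b (S i)) = S (hgt (vx b i))) in E.
      change (drift_rel (vx b (S i)) (vx b i)) in Hd.
      split; [lia|].
      replace (hgt X - hgt (vx b i))%nat with (S (hgt X - hgt (vx b (S i)))) by lia.
      simpl. assert (Hd2 : drift_rel (vx b (S i)) (D (cD X (hgt X - hgt (vx b (S i)))))).
      { eapply drift_rel_iso; [exact IH2|]. exists (dmap _). apply dmap_drift. }
      destruct Hd as [f Hf], Hd2 as [g Hg]. eapply DU; eauto.
Qed.

Lemma canon_universal X : universal_evolution FinMetric MEdge (canon X) X.
Proof.
  split; [apply canon_full|]. intros b Hb.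
  set (n := hgt X). set (m := len b). set (hB := fun i => hgt (vx b i)).
  assert (HBm : hB m = n).
  { unfold hB, m, n. destruct Hb as [_ Ht]. unfold terminal in Ht. unfold vx, len. rewrite Ht. reflexivity. }
  assert (HB0 : hB 0%nat = 0%nat) by apply (full_h0 b X Hb).
  assert (Hstep : forall i, (i < m)%nat -> (hB (S i) <= S (hB i))%nat) by (intros; apply step_le; auto).
  assert (Hnm : (n <= m)%nat) by apply (full_len_ge b X Hb).
  set (r := fun k => proj1_sig (constructive_indefinite_description _
                (least_ex (fun i => (k <= hB i)%nat \/ (m <= i)%nat) m (or_intror (le_n m))))).
  assert (Hr : forall k, ((k <= hB (r k))%nat \/ (m <= r k)%nat) /\
                         forall j, (j < r k)%nat -> ~ ((k <= hB j)%nat \/ (m <= j)%nat)).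
  { intros k. unfold r. destruct constructive_indefinite_description as [i Hi]. exact Hi. }
  assert (R1 : forall k, (r k <= m)%nat).
  { intros k. destruct (Hr k) as [_ H]. destruct (Nat.le_gt_cases (r k) m); auto.
    exfalso. apply (H m); auto. }
  assert (R3 : forall k j, (j < r k)%nat -> (hB j < k)%nat).
  { intros k j Hj. destruct (Hr k) as [_ H]. specialize (H j Hj). lia. }
  assert (R4 : forall k, (k <= n)%nat -> hB (r k) = k).
  { intros k Hk. assert (H : (k <= hB (r k))%nat).
    { destruct (Hr k) as [[H|H] _]; auto. pose proof (R1 k). replace (r k) with m by lia. lia. }
    destruct (r k) as [|j] eqn:Erk.
      + rewrite HB0 in *. lia.
      + assert (Hj : (j < r k)%nat) by (rewrite Erk; lia).
        pose proof (R3 k j Hj). pose proof (R1 k) as R1k. rewrite Erk in R1k.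
        pose proof (Hstep j ltac:(lia)). lia. }
  split; [simpl; exact Hnm|]. exists r. split; [|split].
  - simpl. intros k Hk. destruct (Nat.lt_ge_cases (r k) (r (S k))) as [?|Hge]; auto.
    exfalso. pose proof (R4 k ltac:(lia)). pose proof (R4 (S k) ltac:(lia)).
    destruct (Nat.eq_dec (r (S k)) (r k)) as [E|NE].
    + rewrite E in *. lia.
    + pose proof (R3 k (r (S k)) ltac:(lia)). lia.
  - apply R1.
  - simpl. intros k Hk. apply part1.
    destruct Hb as [Hp Ht]. destruct (iso_chain b X Ht (m - r k) (r k) ltac:(pose proof (R1 k); unfold m in *; lia)) as [_ I].
    fold hB in I. change (hgt (vx b (r k))) with (hB (r k)) in I. rewrite (R4 k Hk) in I.
    apply isometric_sym. exact I.
Qed.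

Lemma monot : monotonous FinMetric MEdge.
Proof.
  intros A B e oA oB HA HB. rewrite (has_height_eq _ _ HA), (has_height_eq _ _ HB). simpl.
  destruct (edge_cases _ _ e) as [Hs|[_ [_ E]]].
  - rewrite (hgt_iso _ _ Hs). lia.
  - lia.
Qed.

Lemma part4 X : regular MEdge X.
Proof.
  intros B [b [Hi Ht]] Hh.
  pose proof (has_height_eq _ _ (Hh _ (has_height_hgt X))) as E. injection E as E.
  destruct (chain_prop b (len b) 0 eq_refl) as [_ C].
  unfold initial, terminal in *. unfold vx, len in C. rewrite Hi, Ht in C.
  apply iso_edge. apply C. exact E.
Qed.
Definition valid (n : nat) (d : nat -> nat -> R) : Prop :=
  (0 < n)%nat /\
  (forall i j, (i < n)%nat -> (j < n)%nat -> (d i j = 0 <-> i = j)) /\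
  (forall i j, (i < n)%nat -> (j < n)%nat -> d i j = d j i) /\
  (forall i j k, (i < n)%nat -> (j < n)%nat -> (k < n)%nat -> d i k <= d i j + d j k).

Section FM.
Variables (n : nat) (d : nat -> nat -> R) (H : valid n d).
Definition FMpt := {i : nat | (i < n)%nat}.
Definition FMd (a b : FMpt) := d (proj1_sig a) (proj1_sig b).
Definition FMg (i : nat) : FMpt :=
  match excluded_middle_informative (i < n)%nat with
  | left h => exist _ i h
  | right _ => exist _ 0%nat (proj1 H) end.
Lemma FM_finite : exists l : list FMpt, forall x, In x l.
Proof.
  exists (map FMg (seq 0 n)). intros [i h].
  replace (exist _ i h) with (FMg i).
  - apply in_map, in_seq. lia.
  - apply sig_ext. unfold FMg. destruct excluded_middle_informative; simpl; [reflexivity|contradiction].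
Qed.
Lemma FM_nonempty : inhabited FMpt.
Proof. constructor. exact (exist _ 0%nat (proj1 H)). Qed.
Lemma FM_zero a b : FMd a b = 0 <-> a = b.
Proof.
  destruct H as [_ [Hz _]]. destruct a as [i hi], b as [j hj]. unfold FMd; simpl.
  rewrite Hz by auto. split.
  - intros ->. apply sig_ext. reflexivity.
  - intros E. injection E. auto.
Qed.
Lemma FM_sym a b : FMd a b = FMd b a.
Proof. destruct H as [_ [_ [Hs _]]]. apply Hs; apply proj2_sig. Qed.
Lemma FM_tri a b c : FMd a c <= FMd a b + FMd b c.
Proof. destruct H as [_ [_ [_ Ht]]]. apply Ht; apply proj2_sig. Qed.
Definition FM : FinMetric :=
  {| pt := FMpt; dist := FMd; pt_finite := FM_finite; pt_nonempty := FM_nonempty;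
     dist_zero := FM_zero; dist_sym := FM_sym; dist_tri := FM_tri |}.
End FM.

Definition One : FinMetric.
Proof.
  refine {| pt := unit; dist := fun _ _ => 0 |}.
  - exists (tt :: nil). intros []. left; reflexivity.
  - constructor. exact tt.
  - intros [] []. tauto.
  - reflexivity.
  - intros; lra.
Defined.

Definition Idx : Set := {n : nat & nat -> nat -> R}.
Definition fidx (s : Idx) : FinMetric :=
  match excluded_middle_informative (valid (projT1 s) (projT2 s)) with
  | left H => FM _ _ H
  | right _ => One end.

Lemma small_M : small FinMetric MEdge.
Proof.
  exists Idx, fidx. intros v. destruct (pt_nonempty v) as [x0].
  destruct (pt_finite v) as [l0 Hl0]. set (l := nodup dec l0).
  assert (Hl : forall x, In x l) by (intros x; apply nodup_In, Hl0).
  assert (Nl : NoDup l) by apply NoDup_nodup.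
  set (n := length l). set (d := fun i j => dist v (nth i l x0) (nth j l x0)).
  assert (V : valid n d).
  { split; [|split; [|split]].
    - unfold n. destruct l; [destruct (Hl x0)|simpl; lia].
    - intros i j Hi Hj. unfold d. rewrite dist_zero. split; [|intros ->; auto].
      intros E. apply (proj1 (NoDup_nth l x0) Nl); auto.
    - intros; apply dist_sym.
    - intros; apply dist_tri. }
  exists (existT _ n d). apply part1. unfold fidx. simpl.
  destruct excluded_middle_informative as [H|H]; [|contradiction].
  exists (fun a : FMpt n => nth (proj1_sig a) l x0). apply iso_of_dp_surj.
  - intros y. destruct (In_nth l y x0 (Hl y)) as [k [Hk E]].
    exists (exist _ k Hk). exact E.
  - intros a b. reflexivity.
Qed.

Theorem mainTheorem2 :
  (forall X Y : FinMetric, isotypic MEdge X Y <-> isometric X Y) /\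
  (forall X : FinMetric, primitive_vertex MEdge X <-> trim X) /\
  phylogenetic_quiver MEdge /\
  (forall X : FinMetric, regular MEdge X).
Proof.
  split; [exact part1|]. split; [exact part2|]. split; [|exact part4].
  split; [exact small_M|]. split; [exact monot|].
  intros X. exists (canon X). apply canon_universal.
Qed.
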